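(* Let $1\leq p<\infty$ and let $N>2$ be an integer. For each integer $i$ with $1\leq i\leq N$, let $T_i=T_{f_i,w^{(i)}}$ be the bilateral weighted pseudo-shift on $\ell^p(\mathbb{Z})$ induced by an invertible map $f_i:\mathbb{Z}\to\mathbb{Z}$ and a bounded nonzero weight sequence $w^{(i)}=(w^{(i)}_m)_{m\in\mathbb{Z}}$. For $m\in\mathbb{Z}$ and $n\in\mathbb{N}$ let $W^{(i)}_{m,n}=\prod_{v=1}^{n}w^{(i)}_{f_i^{v}(m)}$ and $W^{(i)}_{m,-n}=\prod_{v=0}^{n-1}w^{(i)}_{f_i^{-v}(m)}$. Suppose that there exists a strictly increasing sequence $(n_k)_{k\in\mathbb{N}}$ of positive integers such that: (a) for each integer $i$ with $1\leq i\leq N$ and each $m\in\mathbb{Z}$, $|W^{(i)}_{m,n_k}|\to\infty$ and $|W^{(i)}_{m,-n_k}|\to 0$ as $k\to\infty$; and (b) for each $\varepsilon>0$, integers $K,M\in\mathbb{N}$, and finite collection $\{a^{(i)}_j:-M\leq j\leq M,\ 1\leq i\leq N\}$ of nonzero scalars in $\mathbb{K}\setminus\{0\}$, there exists an integer $k\geq K$ such that for all integers $i,\ell$ with $1\leq i,\ell\leq N$ and $i\neq\ell$, \[\left|\frac{W^{(i)}_{f_i^{-n_k}(j),n_k}}{W^{(\ell)}_{f_\ell^{-n_k}(j),n_k}}\right|<\varepsilon\quad\text{whenever } j\in f_\ell^{n_k}([M])\cap f_i^{n_k}(\mathbb{Z}\setminus[M]),\] and \[\left|\frac{W^{(i)}_{f_i^{-n_k}(j),n_k}}{W^{(\ell)}_{f_\ell^{-n_k}(j),n_k}}-\frac{a^{(i)}_{f_i^{-n_k}(j)}}{a^{(\ell)}_{f_\ell^{-n_k}(j)}}\right|<\varepsilon\quad\text{whenever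 } j\in f_\ell^{n_k}([M])\cap f_i^{n_k}([M]),\] where $[M]=\{-M,-M+1,\dots,0,\dots,M\}$. Then $T_1,\dots,T_N$ satisfy the Disjoint Blow-up/Collapse Criterion. In particular, $T_1,\dots,T_N$ are disjoint hypercyclic.
   Context: $\mathbb{K}$ denotes the scalar field ($\mathbb{R}$ or $\mathbb{C}$); $(e_j)_{j\in\mathbb{Z}}$ is the canonical basis of $\ell^p(\mathbb{Z})$. Bilateral weighted pseudo-shift: given an invertible map $f:\mathbb{Z}\to\mathbb{Z}$ and a bounded nonzero weight sequence $w=(w_j)_{j\in\mathbb{Z}}$, $T_{f,w}\big(\sum_{j\in\mathbb{Z}}x_je_j\big)=\sum_{j\in\mathbb{Z}}w_{f(j)}x_{f(j)}e_j$; thus $T_{f,w}^n e_m=W_{m,-n}e_{f^{-n}(m)}$ and $T_{f,w}^n e_{f^n(m)}=W_{m,n}e_m$. Operators $T_1,\dots,T_N$ ($N\geq 2$) on a separable Banach space $X$ are disjoint hypercyclic if there is $x\in X$ such that $\{(T_1^nx,\dots,T_N^nx):n\in\mathbb{N}\}$ is dense in $X^N$. Disjoint Blow-up/Collapse Criterion: operators $T_1,\dots,T_N\in\mathcal{L}(X)$ ($N\ge 2$) satisfy it if there exist a strictly increasing sequence $(n_k)$ of positive integers, a dense subset $X_0\subset X$ and maps $S_k:\bigoplus_{i=1}^N X_0\to X$ such that (i) for each $x\in X_0$ and $1\leq i\leq N$, $T_i^{n_k}x\to 0$ as $k\to\infty$; (ii) for each $\varepsilon>0$, integer $K\in\mathbb{N}$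 and $x_1,\dots,x_N\in X_0$ there is an integer $k\geq K$ with $\|S_k(x_1,\dots,x_N)\|<\varepsilon$ and $\|T_i^{n_k}S_k(x_1,\dots,x_N)-x_i\|<\varepsilon$ for $1\leq i\leq N$. *)

(* Defs.v *)
From HB Require Import structures.
From mathcomp Require Import all_boot all_order all_algebra.
From mathcomp Require Import all_classical all_reals all_analysis.
From mathcomp Require Import complex.

Set Implicit Arguments.
Unset Strict Implicit.
Unset Printing Implicit Defensive.

Import Order.TTheory GRing.Theory Num.Theory.
Local Open Scope classical_set_scope.
Local Open Scope ring_scope.

Definition lp_mem (R : realType) (K : fieldType) (nrm : K -> R) (p : R)
  (x : int -> K) : Prop :=
  (\esum_(j in [set: int]) ((nrm (x j)) `^ p)%:E < +oo)%E.

Definition lp_norm (R : realType) (K : fieldType) (nrm : K -> R) (p : R)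
  (x : int -> K) : R :=
  (fine (\esum_(j in [set: int]) ((nrm (x j)) `^ p)%:E)) `^ p^-1.

Definition lp_sub (K : fieldType) (x y : int -> K) : int -> K :=
  fun j => x j - y j.

Definition lp_operator (R : realType) (K : fieldType) (nrm : K -> R) (p : R)
  (T : (int -> K) -> (int -> K)) : Prop :=
  (forall x, lp_mem nrm p x -> lp_mem nrm p (T x)) /\
  (forall (a : K) x y, lp_mem nrm p x -> lp_mem nrm p y ->
     T (fun j => a * x j + y j) = (fun j => a * T x j + T y j)) /\
  (exists C : R, forall x, lp_mem nrm p x ->
     lp_norm nrm p (T x) <= C * lp_norm nrm p x).

Definition pshift (K : fieldType) (f : int -> int) (w : int -> K)
  (x : int -> K) : int -> K :=
  fun j => w (f j) * x (f j).

Definition Wfwd (K : fieldType) (f : int -> int) (w : int -> K) (m : int)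
  (n : nat) : K :=
  \prod_(1 <= v < n.+1) w (iter v f m).

(** W_{m,-n} = prod_{v=0}^{n-1} w_{f^{-v}(m)}, where g = f^{-1} *)
Definition Wbwd (K : fieldType) (g : int -> int) (w : int -> K) (m : int)
  (n : nat) : K :=
  \prod_(0 <= v < n) w (iter v g m).

Definition inM (M : nat) (m : int) : Prop := (- (M%:Z) <= m <= M%:Z).

(** Disjoint Blow-up/Collapse Criterion for T_1,...,T_N on X = l^p(Z)
   (indices 1..N are represented by 'I_N = {0..N-1}). *)
Definition dBUC (R : realType) (K : fieldType) (nrm : K -> R) (p : R) (N : nat)
  (T : 'I_N -> (int -> K) -> (int -> K)) : Prop :=
  (2 <= N)%N /\ (forall i, lp_operator nrm p (T i)) /\
  exists (n : nat -> nat) (X0 : set (int -> K))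
         (S : nat -> ('I_N -> int -> K) -> int -> K),
    (forall k, (0 < n k)%N) /\ (forall k, (n k < n k.+1)%N) /\
    (forall x, X0 x -> lp_mem nrm p x) /\
    (forall x, lp_mem nrm p x -> forall e : R, 0 < e ->
       exists y, X0 y /\ lp_norm nrm p (lp_sub x y) < e) /\
    (forall k xs, (forall i, X0 (xs i)) -> lp_mem nrm p (S k xs)) /\
    (forall x, X0 x -> forall i,
       (fun k => lp_norm nrm p (iter (n k) (T i) x)) @ \oo --> 0) /\
    (forall e : R, 0 < e -> forall (K0 : nat) (xs : 'I_N -> int -> K),
       (forall i, X0 (xs i)) ->
       exists k, (K0 <= k)%N /\ lp_norm nrm p (S k xs) < e /\
         forall i, lp_norm nrm p (lp_sub (iter (n k) (T i) (S k xs)) (xs i)) < e).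

Definition dHC (R : realType) (K : fieldType) (nrm : K -> R) (p : R) (N : nat)
  (T : 'I_N -> (int -> K) -> (int -> K)) : Prop :=
  (2 <= N)%N /\ (forall i, lp_operator nrm p (T i)) /\
  exists x, lp_mem nrm p x /\
    forall ys : 'I_N -> int -> K, (forall i, lp_mem nrm p (ys i)) ->
    forall e : R, 0 < e ->
    exists m : nat, forall i, lp_norm nrm p (lp_sub (iter m (T i) x) (ys i)) < e.

Definition theorem2p4_for (R : realType) (K : fieldType) (nrm : K -> R) : Prop :=
  forall (p : R) (N : nat) (f g : 'I_N -> int -> int) (w : 'I_N -> int -> K)
         (n : nat -> nat),
  1 <= p -> (2 < N)%N ->
  (forall i, cancel (f i) (g i) /\ cancel (g i) (f i)) ->
  (forall i, exists B : R, forall m, nrm (w i m) <= B) ->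
  (forall i m, w i m != 0) ->
  (forall k, (0 < n k)%N) -> (forall k, (n k < n k.+1)%N) ->
  (forall i m, (fun k => nrm (Wfwd (f i) (w i) m (n k))) @ \oo --> +oo) ->
  (forall i m, (fun k => nrm (Wbwd (g i) (w i) m (n k))) @ \oo --> 0) ->
  (forall eps : R, 0 < eps -> forall (K0 M : nat) (a : 'I_N -> int -> K),
     (forall i j, inM M j -> a i j != 0) ->
     exists k, (K0 <= k)%N /\
       forall i l : 'I_N, i != l -> forall j : int,
         ((exists m, inM M m /\ iter (n k) (f l) m = j) /\
          (exists m, ~ inM M m /\ iter (n k) (f i) m = j) ->
          nrm (Wfwd (f i) (w i) (iter (n k) (g i) j) (n k) /
               Wfwd (f l) (w l) (iter (n k) (g l) j) (n k)) < eps) /\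
         ((exists m, inM M m /\ iter (n k) (f l) m = j) /\
          (exists m, inM M m /\ iter (n k) (f i) m = j) ->
          nrm (Wfwd (f i) (w i) (iter (n k) (g i) j) (n k) /
               Wfwd (f l) (w l) (iter (n k) (g l) j) (n k)
               - a i (iter (n k) (g i) j) / a l (iter (n k) (g l) j)) < eps)) ->
  dBUC nrm p (fun i => pshift (f i) (w i)) /\
  dHC nrm p (fun i => pshift (f i) (w i)).

(* Main.v *)
Require Import Defs.
From HB Require Import structures.
From mathcomp Require Import all_boot all_order all_algebra.
From mathcomp Require Import all_classical all_reals all_analysis.
From mathcomp Require Import complex.
From mathcomp Require Import ring lra zify.

Set Implicit Arguments.
Unset Strict Implicit.
Unset Printing Implicit Defensive.

Import Order.TTheory GRing.Theory Num.Theory.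
Local Open Scope classical_set_scope.
Local Open Scope ring_scope.
Section Esum.
Variable R : realType.

Lemma le_sum_seq_mem (T : eqType) (F : T -> \bar R) (A : seq T) t :
  (forall u, (0 <= F u)%E) -> t \in A -> (F t <= \sum_(u <- A) F u)%E.
Proof.
move=> F0; elim: A => [|a A IH] //=; rewrite big_cons inE => /orP[/eqP->|/IH h].
  by rewrite leeDl // sume_ge0.
by rewrite (le_trans h) // leeDr.
Qed.

Lemma esum_seq_bound (A : seq int) (a : int -> \bar R) (c : R) :
  0 <= c -> (forall j, (0 <= a j)%E) ->
  (forall j, j \notin A -> a j = 0%E) -> (forall j, (a j <= c%:E)%E) ->
  (\esum_(j in [set: int]) a j <= ((size A)%:R * c)%:E)%E.
Proof.
move=> c0 a0 aA ac.
apply: (@le_trans _ _ (\esum_(j in [set: int])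
   \sum_(t <- A) (if j == t then c%:E else 0%E))%E).
  apply: le_esum => j _.
  case: (boolP (j \in A)) => jA; last by rewrite aA // sume_ge0 // => t _; case: ifP.
  apply: (le_trans (ac j)).
  have := @le_sum_seq_mem _ (fun t => if j == t then c%:E else 0%E) A j.
  rewrite eqxx; apply => //= u; case: ifP => //; rewrite lee_fin.
rewrite esum_sum; last by move=> i j _ _; case: ifP => //; rewrite lee_fin.
have E t : (\esum_(j in [set: int]) (if j == t then c%:E else 0%E) = c%:E)%E.
  rewrite -[RHS](@esum_set1 _ _ t (fun=> c%:E)) ?lee_fin //.
  rewrite [RHS]esum_mkcond; apply: eq_esum => j _.
  by rewrite in_set1.
under eq_bigr do rewrite E.
suff -> : (\sum_(t <- A) c%:E = ((size A)%:R * c)%:E)%E by [].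
elim: A {aA} => [|t A IH]; first by rewrite big_nil mul0r.
by rewrite big_cons /= IH -EFinD -[(size A).+1]addn1 natrD mulrDl mul1r addrC.
Qed.

Lemma esum_swap (a : int -> nat -> \bar R) :
  (forall j s, (0 <= a j s)%E) ->
  (\esum_(j in [set: int]) \esum_(s in [set: nat]) a j s =
   \esum_(s in [set: nat]) \esum_(j in [set: int]) a j s)%E.
Proof.
move=> a0; rewrite (@esum_esum _ _ _ [set: int] (fun _ => [set: nat])) //.
rewrite (@esum_esum _ _ _ [set: nat] (fun _ => [set: int])) //.
rewrite (reindex_esum ([set: nat] `*`` (fun=> [set: int]))
  ([set: int] `*`` (fun=> [set: nat])) (fun x => (x.2, x.1))) //.
split.
- by move=> [i j].
- by move=> [i1 i2] [j1 j2] _ _ [] -> ->.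
- by move=> [i j] _; exists (j, i).
Qed.

Lemma esum_scale_le (T : choiceType) (a : T -> \bar R) (c : R) :
  0 <= c -> (forall j, (0 <= a j)%E) ->
  (\esum_(j in [set: T]) (c%:E * a j) <= c%:E * \esum_(j in [set: T]) a j)%E.
Proof.
move=> c0 a0; apply: ge_ereal_sup => _ [X [finX _] <-] /=.
rewrite -ge0_mule_fsumr //; apply: lee_wpmul2l; first by rewrite lee_fin.
by apply: ereal_sup_ubound; exists X.
Qed.

Lemma esum_geom (c : R) : 0 <= c ->
  (\esum_(s in [set: nat]) (c * (2^-1) ^+ s)%:E <= (2 * c)%:E)%E.
Proof.
move=> c0; rewrite -nneseries_esumT; last first.
  by move=> n; rewrite lee_fin mulr_ge0 // exprn_ge0 // invr_ge0.
apply: lime_le; first by apply: is_cvg_nneseries => n _; rewrite lee_fin mulr_ge0 // exprn_ge0 // invr_ge0.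
apply: nearW => n /=.

rewrite sumEFin lee_fin -big_distrr /=.
rewrite [leRHS]mulrC; apply: ler_wpM2l => //.
elim: n => [|n IH]; first by rewrite big_nil.
rewrite big_nat_recr //=.
suff h : \sum_(0 <= i < n) 2^-1 ^+ i = 2 - 2 * 2^-1 ^+ n :> R.
  rewrite h; have : 0 <= 2^-1 ^+ n :> R by rewrite exprn_ge0 // invr_ge0.
  lra.
elim: n {IH} => [|n IH]; first by rewrite big_nil expr0 mulr1 subrr.
rewrite big_nat_recr //= IH exprS.
by set q := 2^-1 ^+ n; field.
Qed.

End Esum.
Section LP.
Variables (R : realType) (K : fieldType) (nrm : K -> R) (p : R).
Hypothesis p_gt0 : 0 < p.
Hypothesis nrm0 : nrm 0 = 0.
Hypothesis nrm_ge0 : forall x, 0 <= nrm x.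
Hypothesis nrm_eq0 : forall x, nrm x = 0 -> x = 0.
Hypothesis nrmM : forall x y, nrm (x * y) = nrm x * nrm y.
Hypothesis nrmD : forall x y, nrm (x + y) <= nrm x + nrm y.
Hypothesis nrmN : forall x, nrm (- x) = nrm x.

Definition Phi (v : int -> K) : \bar R :=
  \esum_(j in [set: int]) ((nrm (v j)) `^ p)%:E.

Lemma pw_ge0 x : (0 <= ((nrm x) `^ p)%:E)%E.
Proof. by rewrite lee_fin powR_ge0. Qed.

Lemma pw0 : (nrm 0) `^ p = 0.
Proof. by rewrite nrm0 powR0 // gt_eqF. Qed.

Lemma Phi_ge0 v : (0 <= Phi v)%E.
Proof. by apply: esum_ge0 => j _; apply: pw_ge0. Qed.

Lemma powR_le a b : 0 <= a -> a <= b -> a `^ p <= b `^ p.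
Proof.
move=> a0 ab; apply: ge0_ler_powR; rewrite ?nnegrE //; first exact: ltW.
exact: le_trans ab.
Qed.

Lemma powR_pinv a : 0 <= a -> (a `^ p) `^ p^-1 = a.
Proof. by move=> a0; rewrite -powRrM divff ?gt_eqF // powRr1. Qed.

Lemma lp_norm_small e : 0 < e -> exists2 d, 0 < d &
  forall v, (Phi v <= d%:E)%E -> lp_norm nrm p v < e.
Proof.
move=> e0; exists ((e / 2) `^ p); first by rewrite powR_gt0 // divr_gt0.
move=> v hv; rewrite /lp_norm -/(Phi v).
have f0 : 0 <= fine (Phi v) by apply: fine_ge0; apply: Phi_ge0.
have fle : fine (Phi v) <= (e / 2) `^ p.
  have : Phi v \is a fin_num.
    by rewrite ge0_fin_numE ?Phi_ge0 // (le_lt_trans hv) // ltry.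
  move=> fv; rewrite -lee_fin fineK //.
apply: (@le_lt_trans _ _ (((e / 2) `^ p) `^ p^-1)).
  apply: ge0_ler_powR; rewrite ?nnegrE ?powR_ge0 //.
  by rewrite invr_ge0 ltW.
rewrite powR_pinv; first lra.
by rewrite divr_ge0 // ltW.
Qed.

Lemma Phi_seq_bound (v : int -> K) (A : seq int) (rho : R) : 0 <= rho ->
  (forall j, v j != 0 -> j \in A) -> (forall j, nrm (v j) <= rho) ->
  (Phi v <= ((size A)%:R * rho `^ p)%:E)%E.
Proof.
move=> r0 vA vr; apply: esum_seq_bound.
- exact: powR_ge0.
- by move=> j; apply: pw_ge0.
- move=> j jA; have -> : v j = 0 by apply/eqP; apply: contraNT jA; apply: vA.
  by rewrite pw0.
- by move=> j; rewrite lee_fin; apply: powR_le.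
Qed.

Lemma coord_small (Z : nat) d : 0 < d -> exists2 rho, 0 < rho &
  forall v (A : seq int), (size A <= Z)%N -> (forall j, v j != 0 -> j \in A) ->
  (forall j, nrm (v j) <= rho) -> (Phi v <= d%:E)%E.
Proof.
move=> d0; have Z0 : 0 < Z.+1%:R :> R by rewrite ltr0n.
exists ((d / Z.+1%:R) `^ p^-1); first by rewrite powR_gt0 // divr_gt0.
move=> v A sA vA vr; apply: (le_trans (Phi_seq_bound _ vA vr)).
  exact: powR_ge0.
have dZ : 0 <= d / Z.+1%:R by rewrite divr_ge0 // ltW.
rewrite -powRrM mulVf ?gt_eqF // powRr1 // lee_fin.
rewrite mulrA ler_pdivrMr // mulrC ler_wpM2l ?(ltW d0) // ler_nat.
by rewrite (leq_trans sA).
Qed.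

Definition X0 (v : int -> K) := exists M : nat, forall j, ~ inM M j -> v j = 0.

Definition Mlist (M : nat) : seq int := [seq (t%:Z - M%:Z) | t <- iota 0 (M + M).+1].
Arguments Mlist : simpl never.

Lemma Mlist_size M : size (Mlist M) = (M + M).+1.
Proof. by rewrite size_map size_iota. Qed.

Lemma mem_Mlist M j : inM M j -> j \in Mlist M.
Proof.
rewrite /inM => /andP[h1 h2]; apply/mapP.
exists (absz (j + M%:Z)).
  rewrite mem_iota add0n ltnS; rewrite -lez_nat abszE ger0_norm; last by lia.
  by lia.
by rewrite abszE ger0_norm; [lia|lia].
Qed.

Lemma Mlist_inM M j : j \in Mlist M -> inM M j.
Proof.
move=> /mapP[t]; rewrite mem_iota add0n ltnS => ht ->.
rewrite /inM; apply/andP; split; lia.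
Qed.

Lemma le_sumR_mem (T : eqType) (F : T -> R) (A : seq T) t :
  (forall u, 0 <= F u) -> t \in A -> F t <= \sum_(u <- A) F u.
Proof.
move=> F0; elim: A => [|a A IH] //=; rewrite big_cons inE => /orP[/eqP->|/IH h].
  by rewrite lerDl sumr_ge0.
by rewrite (le_trans h) // lerDr.
Qed.

Lemma X0_lp v : X0 v -> lp_mem nrm p v.
Proof.
move=> [M hM]; rewrite /lp_mem -/(Phi v).
set rho := \sum_(t <- Mlist M) nrm (v t).
have r0 : 0 <= rho by apply: sumr_ge0.
apply: (le_lt_trans (@Phi_seq_bound v (Mlist M) rho r0 _ _)); last by rewrite ltry.
  move=> j vj; apply: mem_Mlist; apply: contra_neqP vj => /hM ->; done.
move=> j; case: (boolP (j \in Mlist M)) => jM.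
  by apply: le_sumR_mem.
by rewrite hM ?nrm0 // => /mem_Mlist; rewrite (negbTE jM).
Qed.

Lemma pw_tri a b : (nrm (a + b)) `^ p <= 2 `^ p * ((nrm a) `^ p + (nrm b) `^ p).
Proof.
have h : nrm (a + b) <= 2 * Num.max (nrm a) (nrm b).
  apply: (le_trans (nrmD a b)).
  have := le_max (nrm a) (nrm a) (nrm b); have := le_max (nrm b) (nrm a) (nrm b).
  rewrite !lexx orbT /= => h1 h2; lra.
apply: (le_trans (powR_le (nrm_ge0 _) h)).
rewrite powRM ?ler0n //; last by rewrite le_max nrm_ge0.
apply: ler_wpM2l; first exact: powR_ge0.
case: (leP (nrm a) (nrm b)) => _.
  by rewrite lerDr powR_ge0.
by rewrite lerDl powR_ge0.
Qed.

Lemma Phi_quasi (u : int -> K) (al be : int -> \bar R) :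
  (forall j, (0 <= al j)%E) -> (forall j, (0 <= be j)%E) ->
  (forall j, (((nrm (u j)) `^ p)%:E <= (2 `^ p)%:E * (al j + be j))%E) ->
  (Phi u <= (2 `^ p)%:E * (\esum_(j in [set: int]) al j + \esum_(j in [set: int]) be j))%E.
Proof.
move=> a0 b0 h; apply: (le_trans (le_esum (fun j _ => h j))).
rewrite -esumD //; apply: esum_scale_le; first exact: powR_ge0.
by move=> j; rewrite adde_ge0.
Qed.

Lemma Phi_tri (u a b : int -> K) :
  (forall j, u j = a j + b j) ->
  (Phi u <= (2 `^ p)%:E * (Phi a + Phi b))%E.
Proof.
move=> hu; apply: Phi_quasi; try by move=> j; apply: pw_ge0.
by move=> j; rewrite hu -EFinD -EFinM lee_fin pw_tri.
Qed.

Lemma finite_bound (X : set int) : finite_set X -> exists M : nat, forall j, X j -> inM M j.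
Proof.
move=> /finite_fsetP[F ->]; exists (\sum_(j <- finmap.enum_fset F) absz j)%N => j /= jF.
have : (absz j <= \sum_(j <- finmap.enum_fset F) absz j)%N.
  have jF' : j \in finmap.enum_fset F := jF.
  move: jF'; elim: (finmap.enum_fset F) => [|a s IH] //=; rewrite big_cons inE => /orP[/eqP->|/IH h].
    by rewrite leq_addr.
  by rewrite (leq_trans h) // leq_addl.
rewrite /inM -lez_nat abszE => h; rewrite -ler_norml; exact: h.
Qed.

Definition trunc (M : nat) (v : int -> K) : int -> K :=
  fun j => if (- (M%:Z) <= j <= M%:Z) then 0 else v j.

Lemma tail_small v : lp_mem nrm p v -> forall e, 0 < e ->
  exists M : nat, forall M', (M <= M')%N -> (Phi (trunc M' v) <= e%:E)%E.
Proof.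
rewrite /lp_mem -/(Phi v) => vf e e0.
have fv : Phi v \is a fin_num by rewrite ge0_fin_numE ?Phi_ge0.
set S := fine (Phi v).
have SE : Phi v = S%:E by rewrite fineK.
have : ((S - e)%:E < Phi v)%E by rewrite SE lte_fin; lra.
move=> /ereal_sup_gt[_ [X [finX _] <-]] hX.
have [M hM] := finite_bound finX.
exists M => M' MM'.
set B := [set j : int | inM M' j].
have hsplit := esumID B [set: int] (fun j => ((nrm (v j)) `^ p)%:E) (fun j _ => pw_ge0 _).
have htr : Phi (trunc M' v) = \esum_(j in [set: int] `&` ~` B) ((nrm (v j)) `^ p)%:E.
  rewrite /Phi (esumID B) ?(esum1 (D := [set: int] `&` B)); last first.
  - by move=> j _; apply: pw_ge0.
  - move=> j [_ /= hj]; rewrite /trunc; move: hj; rewrite /inM => ->; by rewrite pw0.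
  rewrite add0e; apply: eq_esum => j [_ /= hj].
  by rewrite /trunc; move: hj; rewrite /inM; case: ifP.
rewrite htr; rewrite leNgt; apply/negP => hlt.
have hin : (\sum_(i \in X) ((nrm (v i)) `^ p)%:E <=
    \esum_(j in [set: int] `&` B) ((nrm (v j)) `^ p)%:E)%E.
  apply: esum_ge; exists X => //; split => // j Xj; split => //.
  have := hM j Xj; rewrite /B /inM /=; lia.
have := lteD (lt_le_trans hX hin) hlt.
by rewrite -hsplit -/(Phi v) SE -EFinD subrK ltxx.
Qed.

Lemma Phi_reindex (v : int -> K) (h hi : int -> int) :
  cancel h hi -> cancel hi h -> Phi (fun j => v (h j)) = Phi v.
Proof.
move=> c1 c2; rewrite /Phi [RHS](reindex_esum [set: int] [set: int] h) //.
split => //; first by move=> i j _ _; apply: (can_inj c1).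
by move=> j _; exists (hi j).
Qed.

Lemma Phi_pshift (f g : int -> int) (w : int -> K) (B : R) (v : int -> K) :
  cancel f g -> cancel g f -> 0 <= B -> (forall m, nrm (w m) <= B) ->
  (Phi (pshift f w v) <= (B `^ p)%:E * Phi v)%E.
Proof.
move=> c1 c2 B0 wB.
rewrite -(Phi_reindex v c1 c2).
apply: (le_trans _ (@esum_scale_le _ _ (fun j => ((nrm (v (f j))) `^ p)%:E) (B `^ p) (powR_ge0 _ _) (fun j => pw_ge0 _))).
apply: le_esum => j _; rewrite /pshift -EFinM lee_fin nrmM powRM //.
by apply: ler_wpM2r; [exact: powR_ge0 | apply: powR_le].
Qed.

Lemma Phi_iter (f g : int -> int) (w : int -> K) (B : R) (v : int -> K) n :
  cancel f g -> cancel g f -> 0 <= B -> (forall m, nrm (w m) <= B) ->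
  (Phi (iter n (pshift f w) v) <= ((B `^ p) ^+ n)%:E * Phi v)%E.
Proof.
move=> c1 c2 B0 wB; elim: n => [|n IH]; first by rewrite expr0 mul1e.
rewrite iterS; apply: (le_trans (Phi_pshift _ c1 c2 B0 wB)).
rewrite exprS EFinM -muleA; apply: lee_wpmul2l => //.
by rewrite lee_fin powR_ge0.
Qed.

Lemma pshift_operator (f g : int -> int) (w : int -> K) :
  cancel f g -> cancel g f -> (exists B : R, forall m, nrm (w m) <= B) ->
  lp_operator nrm p (pshift f w).
Proof.
move=> c1 c2 [B0 hB0].
set B := Num.max B0 0.
have B0p : 0 <= B by rewrite le_max lexx orbT.
have hB m : nrm (w m) <= B by rewrite le_max hB0.
have hle v : (Phi (pshift f w v) <= (B `^ p)%:E * Phi v)%E by apply: Phi_pshift.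
split; [|split].
- move=> x; rewrite /lp_mem -!/(Phi _) => hx.
  apply: (le_lt_trans (hle x)).
  have fx : Phi x \is a fin_num by rewrite ge0_fin_numE ?Phi_ge0.
  by rewrite -(fineK fx) -EFinM ltry.
- move=> a x y _ _; apply: funext => j; rewrite /pshift; ring.
- exists B => x; rewrite /lp_mem -/(Phi x) => hx.
  have fx : Phi x \is a fin_num by rewrite ge0_fin_numE ?Phi_ge0.
  have fTx : Phi (pshift f w x) \is a fin_num.
    rewrite ge0_fin_numE ?Phi_ge0 //; apply: (le_lt_trans (hle x)).
    by rewrite -(fineK fx) -EFinM ltry.
  rewrite /lp_norm -!/(Phi _).
  have : fine (Phi (pshift f w x)) <= B `^ p * fine (Phi x).
    by rewrite -lee_fin EFinM !fineK.
  move=> h.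
  apply: (le_trans (y := (B `^ p * fine (Phi x)) `^ p^-1)).
    apply: ge0_ler_powR; rewrite ?nnegrE ?mulr_ge0 ?powR_ge0 ?fine_ge0 ?Phi_ge0 //.
    by rewrite invr_ge0 ltW.
  rewrite powRM ?powR_ge0 ?fine_ge0 ?Phi_ge0 // powR_pinv //.
Qed.


Lemma nrm1 : nrm 1 = 1.
Proof.
have h : nrm 1 = nrm 1 * nrm 1 by rewrite -nrmM mulr1.
have n1 : nrm 1 != 0 by apply/eqP => /nrm_eq0 /eqP; rewrite oner_eq0.
by apply: (mulfI n1); rewrite -h mulr1.
Qed.

Lemma nrmV x : nrm (x^-1) = (nrm x)^-1.
Proof.
have [->|x0] := eqVneq x 0; first by rewrite invr0 nrm0 invr0.
have nx : nrm x != 0 by apply/eqP => /nrm_eq0 /eqP; rewrite (negbTE x0).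
by apply: (mulfI nx); rewrite -nrmM divff // divff // nrm1.
Qed.

Lemma nrm_div x y : nrm (x / y) = nrm x / nrm y.
Proof. by rewrite nrmM nrmV. Qed.

Lemma nrmB x y : nrm (x - y) = nrm (y - x).
Proof. by rewrite -nrmN opprB. Qed.

Definition ev (P : nat -> Prop) := exists K0, forall k, (K0 <= k)%N -> P k.

Lemma ev_and P Q : ev P -> ev Q -> ev (fun k => P k /\ Q k).
Proof.
move=> [a ha] [b hb]; exists (maxn a b) => k hk; split.
  by apply: ha; apply: leq_trans hk; apply: leq_maxl.
by apply: hb; apply: leq_trans hk; apply: leq_maxr.
Qed.

Lemma ev_seq (T : eqType) (s : seq T) (P : T -> nat -> Prop) :
  (forall x, x \in s -> ev (P x)) -> ev (fun k => forall x, x \in s -> P x k).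
Proof.
elim: s => [|a s IH] h; first by exists 0%N.
have [K1 h1] := h a (mem_head _ _).
have [K2 h2] := IH (fun x (xs : x \in s) => h x (mem_behead (s := a :: s) xs)).
exists (maxn K1 K2) => k hk x; rewrite inE => /orP[/eqP->|xs].
  by apply: h1; apply: leq_trans hk; apply: leq_maxl.
by apply: h2 => //; apply: leq_trans hk; apply: leq_maxr.
Qed.

Lemma ev_ord (m : nat) (P : 'I_m -> nat -> Prop) :
  (forall i, ev (P i)) -> ev (fun k => forall i, P i k).
Proof.
move=> h; have [K1 h1] := ev_seq (s := enum 'I_m) (fun i _ => h i).
by exists K1 => k hk i; apply: h1 => //; rewrite mem_enum.
Qed.

Lemma ev_near (P : nat -> Prop) : (\forall k \near \oo, P k) -> ev P.
Proof. by move=> [K1 _ h]; exists K1 => k hk; apply: h. Qed.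

Lemma ev_mono (P Q : nat -> Prop) : ev P -> (forall k, P k -> Q k) -> ev Q.
Proof. by move=> [a h] hPQ; exists a => k /h /hPQ. Qed.

Lemma iter_can (F G : int -> int) k : cancel F G -> cancel (iter k F) (iter k G).
Proof.
move=> c; elim: k => [|k IH] x //.
by rewrite iterSr iterS c IH.
Qed.

Lemma Wfwd_S (F : int -> int) (W : int -> K) m k :
  Wfwd F W m k.+1 = W (F m) * Wfwd F W (F m) k.
Proof.
rewrite /Wfwd big_nat_recl // /=; congr (_ * _).
by apply: eq_bigr => v _; rewrite -iterSr.
Qed.

Lemma iter_pshift (F : int -> int) (W : int -> K) k x :
  iter k (pshift F W) x = fun j => Wfwd F W j k * x (iter k F j).
Proof.
elim: k => [|k IH]; apply: funext => j /=.
  by rewrite /Wfwd big_geq // mul1r.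
by rewrite IH /pshift Wfwd_S -iterSr /= mulrA.
Qed.

Lemma Wfwd_bwd (F G : int -> int) (W : int -> K) m k : cancel F G ->
  Wfwd F W m k = Wbwd G W (iter k F m) k.
Proof.
move=> c; elim: k m => [|k IH] m; first by rewrite /Wfwd /Wbwd !big_geq.
rewrite Wfwd_S IH /Wbwd [in RHS]big_nat_recr // /= -iterSr mulrC; congr (_ * _).
by rewrite -iterS iterSr (iter_can k c).
Qed.

Lemma Wfwd_neq0 (F : int -> int) (W : int -> K) m k : (forall m, W m != 0) ->
  Wfwd F W m k != 0.
Proof. by move=> h; rewrite /Wfwd prodf_seq_neq0; apply/allP => v _; apply: h. Qed.
Variables (N : nat) (f g : 'I_N -> int -> int) (w : 'I_N -> int -> K) (n : nat -> nat).
Hypothesis fgc : forall i, cancel (f i) (g i) /\ cancel (g i) (f i).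
Hypothesis w_neq0 : forall i m, w i m != 0.
Hypothesis Ha1 : forall i m, (fun k => nrm (Wfwd (f i) (w i) m (n k))) @ \oo --> +oo.
Hypothesis Ha2 : forall i m, (fun k => nrm (Wbwd (g i) (w i) m (n k))) @ \oo --> 0.
Hypothesis Hb : forall eps : R, 0 < eps -> forall (K0 M : nat) (a : 'I_N -> int -> K),
     (forall i j, inM M j -> a i j != 0) ->
     exists k, (K0 <= k)%N /\
       forall i l : 'I_N, i != l -> forall j : int,
         ((exists m, inM M m /\ iter (n k) (f l) m = j) /\
          (exists m, ~ inM M m /\ iter (n k) (f i) m = j) ->
          nrm (Wfwd (f i) (w i) (iter (n k) (g i) j) (n k) /
               Wfwd (f l) (w l) (iter (n k) (g l) j) (n k)) < eps) /\
         ((exists m, inM M m /\ iter (n k) (f l) m = j) /\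
          (exists m, inM M m /\ iter (n k) (f i) m = j) ->
          nrm (Wfwd (f i) (w i) (iter (n k) (g i) j) (n k) /
               Wfwd (f l) (w l) (iter (n k) (g l) j) (n k)
               - a i (iter (n k) (g i) j) / a l (iter (n k) (g l) j)) < eps).
Hypothesis nrm_small : forall e, 0 < e -> exists z, z != 0 /\ nrm z < e.

Definition Sk k (xs : 'I_N -> int -> K) : int -> K := fun j =>
  match [pick i | xs i (iter (n k) (g i) j) != 0] with
  | Some i => xs i (iter (n k) (g i) j) / Wfwd (f i) (w i) (iter (n k) (g i) j) (n k)
  | None => 0
  end.

Definition Slist k M : seq int :=
  flatten [seq [seq iter (n k) (f i) m | m <- Mlist M] | i <- enum 'I_N].

Lemma Slist_size k M : size (Slist k M) = (N * (M + M).+1)%N.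
Proof.
rewrite /Slist; have hL := Mlist_size M; move: (Mlist M) hL => L hL.
rewrite size_flatten /shape -map_comp.
rewrite -[X in (X * _)%N](size_enum_ord N).
elim: (enum 'I_N) => [|i s IH] //=.
by rewrite IH size_map hL mulSn.
Qed.

Lemma inM_dec M j : inM M j \/ ~ inM M j.
Proof. by case: (boolP (- (M%:Z) <= j <= M%:Z)) => h; [left | right; apply/negP]. Qed.

Lemma supp_inM (x : int -> K) M j : (forall j, ~ inM M j -> x j = 0) -> x j != 0 -> inM M j.
Proof. by move=> h xj; case: (inM_dec M j) => // /h hx; move: xj; rewrite hx eqxx. Qed.

Lemma Sk_supp k xs M : (forall i j, ~ inM M j -> xs i j = 0) ->
  forall j, Sk k xs j != 0 -> j \in Slist k M.
Proof.
move=> hM j; rewrite /Sk; case: pickP => [i hi _|_]; last by rewrite eqxx.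
apply/flatten_mapP; exists i; first by rewrite mem_enum.
apply/mapP; exists (iter (n k) (g i) j).
  by apply: mem_Mlist; apply: (supp_inM (hM i)).
by rewrite (iter_can _ (fgc i).2).
Qed.

Lemma step (xs : 'I_N -> int -> K) (M : nat) (Q : nat -> Prop) (d : R) :
  (forall i j, ~ inM M j -> xs i j = 0) -> 0 < d -> ev Q ->
  exists k, Q k /\ (Phi (Sk k xs) <= d%:E)%E /\
   forall l, (Phi (lp_sub (iter (n k) (pshift (f l) (w l)) (Sk k xs)) (xs l)) <= d%:E)%E.
Proof.
move=> hM d0 hQ.
set X := 1 + \sum_(i <- enum 'I_N) \sum_(t <- Mlist M) nrm (xs i t).
have Xs0 : 0 <= \sum_(i <- enum 'I_N) \sum_(t <- Mlist M) nrm (xs i t).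
  by apply: sumr_ge0 => i _; apply: sumr_ge0.
have X0 : 0 < X by rewrite /X; lra.
have xX i t : nrm (xs i t) <= X.
  case: (inM_dec M t) => tM; last by rewrite hM // nrm0 ltW.
  apply: (le_trans (y := \sum_(i <- enum 'I_N) \sum_(t <- Mlist M) nrm (xs i t))); last by rewrite /X; lra.
  apply: (le_trans (y := \sum_(t <- Mlist M) nrm (xs i t))).
    by apply: (le_sumR_mem (F := fun t => nrm (xs i t))) => //; apply: mem_Mlist.
  apply: (le_sumR_mem (F := fun i => \sum_(t <- Mlist M) nrm (xs i t))).
    by move=> u; apply: sumr_ge0.
  by rewrite mem_enum.
have [rho r0 hrho] := coord_small ((M + M).+1 + N * (M + M).+1) d0.
have [eta [eta0 etas]] : exists z, z != 0 /\ nrm z < rho / 2 by apply: nrm_small; lra.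
set eps := rho / (2 * X).
have eps0 : 0 < eps by rewrite divr_gt0 //; lra.
have epsX : eps * X = rho / 2 by rewrite /eps; field; lra.
set a := fun i j => if xs i j != 0 then xs i j else eta.
have a0 : forall i j, inM M j -> a i j != 0 by move=> i j _; rewrite /a; case: ifP.
have hW : ev (fun k => forall i m, m \in Mlist M ->
    X / rho <= nrm (Wfwd (f i) (w i) m (n k))).
  apply: ev_ord => i; apply: ev_seq => m _; apply: ev_near.
  exact: cvgry_ge (Ha1 i m) (X / rho).
have [K1 hK1] := ev_and hQ hW.
have [k [kK1 hk]] := Hb eps0 K1 a0.
have [Qk Wk] := hK1 k kK1.
exists k; split => //.
set nk := n k.
have Wpos i m : inM M m -> 0 < nrm (Wfwd (f i) (w i) m nk).
  move=> mM; apply: (lt_le_trans _ (Wk i m (mem_Mlist mM))); exact: divr_gt0.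
split.
  apply: (hrho _ (Slist k M)).
  - by rewrite Slist_size leq_addl.
  - exact: Sk_supp.
  move=> j; rewrite /Sk; case: pickP => [i hi|_]; last by rewrite nrm0 ltW.
  set m := iter nk (g i) j.
  have mM : inM M m by apply: (supp_inM (hM i)).
  rewrite nrm_div ler_pdivrMr ?Wpos //.
  apply: (le_trans (xX i m)).
  have := Wk i m (mem_Mlist mM); rewrite -/nk ler_pdivrMr // => h.
  by rewrite mulrC.
move=> l.
apply: (hrho _ (Mlist M ++ map (iter nk (g l)) (Slist k M))).
- by rewrite size_cat size_map Slist_size Mlist_size.
- move=> j; rewrite /lp_sub iter_pshift => hj; rewrite mem_cat.
  case: (inM_dec M j) => jM; first by rewrite mem_Mlist.
  apply/orP; right; apply/mapP; exists (iter nk (f l) j); last by rewrite (iter_can _ (fgc l).1).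
  apply: (Sk_supp hM); apply: contra_neq hj => ->.
  by rewrite mulr0 hM // subrr.
move=> j; rewrite /lp_sub iter_pshift /Sk -/nk.
set t := iter nk (f l) j.
have gt : iter nk (g l) t = j by rewrite (iter_can _ (fgc l).1).
case: pickP => [i0 hi0|hnone]; last first.
  have := hnone l; rewrite gt => /negbFE /eqP ->.
  by rewrite mulr0 subrr nrm0 ltW.
case: (eqVneq i0 l) => [e0 | il].
  rewrite e0 gt mulrCA divff ?Wfwd_neq0 // mulr1 subrr nrm0; exact: ltW.
set m0 := iter nk (g i0) t.
have m0M : inM M m0 by apply: (supp_inM (hM i0)).
have ft0 : iter nk (f i0) m0 = t by rewrite /m0 (iter_can _ (fgc i0).2).
have W0n : Wfwd (f i0) (w i0) m0 nk != 0 by apply: Wfwd_neq0.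
have Wln : Wfwd (f l) (w l) j nk != 0 by apply: Wfwd_neq0.
have li : l != i0 by rewrite eq_sym.
have [h1 h2] := hk l i0 li t.
rewrite gt -/m0 in h1 h2.
have a0e : a i0 m0 = xs i0 m0 by rewrite /a hi0.
case: (inM_dec M j) => jM.
  have := h2 (conj (ex_intro _ m0 (conj m0M ft0)) (ex_intro _ j (conj jM erefl))).
  rewrite a0e => hlt.
  have -> : Wfwd (f l) (w l) j nk * (xs i0 m0 / Wfwd (f i0) (w i0) m0 nk) - xs l j =
    (Wfwd (f l) (w l) j nk / Wfwd (f i0) (w i0) m0 nk - a l j / xs i0 m0) * xs i0 m0
    + (a l j - xs l j).
    by field; rewrite hi0 W0n.
  apply: (le_trans (nrmD _ _)); rewrite nrmM.
  have e1 : nrm (a l j - xs l j) <= nrm eta.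
    rewrite /a; case: (eqVneq (xs l j) 0) => [->|ne] /=; first by rewrite subr0.
    by rewrite subrr nrm0 nrm_ge0.
  have := ler_pM (nrm_ge0 _) (nrm_ge0 _) (ltW hlt) (xX i0 m0).
  lra.
have := h1 (conj (ex_intro _ m0 (conj m0M ft0)) (ex_intro _ j (conj jM erefl))).
move=> hlt; rewrite (hM l j jM) subr0 mulrA mulrAC nrmM.
have := ler_pM (nrm_ge0 _) (nrm_ge0 _) (ltW hlt) (xX i0 m0).
lra.
Qed.
Lemma seq_X0 (v : int -> K) (A : seq int) : (forall j, v j != 0 -> j \in A) -> X0 v.
Proof.
move=> hA; exists (\sum_(j <- A) absz j)%N => j hj.
case: (eqVneq (v j) 0) => // /hA jA; exfalso; apply: hj; rewrite /inM.
have : (absz j <= \sum_(j <- A) absz j)%N.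
  elim: A jA {hA} => [|a s IH] //=; rewrite big_cons inE => /orP[/eqP->|/IH h].
    by rewrite leq_addr.
  by rewrite (leq_trans h) // leq_addl.
by rewrite -lez_nat abszE => h; rewrite -ler_norml.
Qed.

Lemma common_M (xs : 'I_N -> int -> K) : (forall i, X0 (xs i)) ->
  exists M, forall i j, ~ inM M j -> xs i j = 0.
Proof.
move=> h; have [Mi hMi] := fin_all_exists h.
have [M hM'] : exists M, forall i, (Mi i <= M)%N.
  by exists (\max_(i : 'I_N) Mi i) => i; apply: leq_bigmax.
exists M => i j hj; apply: hMi => hin; apply: hj.
have le := hM' i.
move: hin; rewrite /inM => /andP[h1 h2]; apply/andP; split; lia.
Qed.

Lemma ev_of_near (P : nat -> Prop) : ev P -> \forall k \near \oo, P k.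
Proof. by move=> [K1 h]; exists K1 => // k /= hk; apply: h. Qed.

Lemma Tpow_small i x d : X0 x -> 0 < d ->
  ev (fun k => (Phi (iter (n k) (pshift (f i) (w i)) x) <= d%:E)%E).
Proof.
move=> [M hM] d0.
set X := 1 + \sum_(t <- Mlist M) nrm (x t).
have Xs0 : 0 <= \sum_(t <- Mlist M) nrm (x t) by apply: sumr_ge0.
have X0p : 0 < X by rewrite /X; lra.
have xX t : nrm (x t) <= X.
  case: (inM_dec M t) => tM; last by rewrite hM // nrm0 ltW.
  apply: (le_trans (y := \sum_(t <- Mlist M) nrm (x t))); last by rewrite /X; lra.
  by apply: (le_sumR_mem (F := fun t => nrm (x t))) => //; apply: mem_Mlist.
have [rho r0 hrho] := coord_small (M + M).+1 d0.
have hW : ev (fun k => forall m, m \in Mlist M ->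
    nrm (Wbwd (g i) (w i) m (n k)) <= rho / X).
  apply: ev_seq => m _; apply: ev_near.
  have [K1 _ hK1] := cvgr0_norm_le _ (Ha2 i m) _ (divr_gt0 r0 X0p).
  exists K1 => // k hk; have := hK1 k hk; rewrite /= ger0_norm //.
apply: (ev_mono hW) => k hk.
apply: (hrho _ (map (iter (n k) (g i)) (Mlist M))).
- by rewrite size_map Mlist_size.
- move=> j; rewrite iter_pshift => hj; apply/mapP.
  exists (iter (n k) (f i) j); last by rewrite (iter_can _ (fgc i).1).
  apply: mem_Mlist; apply: (supp_inM hM); apply: contra_neq hj => ->; by rewrite mulr0.
- move=> j; rewrite iter_pshift nrmM.
  case: (eqVneq (x (iter (n k) (f i) j)) 0) => [->|hx]; first by rewrite nrm0 mulr0 ltW.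
  have mM := supp_inM hM hx.
  rewrite (Wfwd_bwd _ _ _ (fgc i).1).
  have := ler_pM (nrm_ge0 _) (nrm_ge0 _) (hk _ (mem_Mlist mM)) (xX (iter (n k) (f i) j)).
  by rewrite divfK ?gt_eqF.
Qed.

Hypothesis w_bnd : forall i, exists B : R, forall m, nrm (w i m) <= B.
Hypothesis n_gt0 : forall k, (0 < n k)%N.
Hypothesis n_incr : forall k, (n k < n k.+1)%N.
Hypothesis N_gt2 : (2 < N)%N.

Theorem dBUC_holds : dBUC nrm p (fun i => pshift (f i) (w i)).
Proof.
split; first by apply: ltnW.
split; first by move=> i; apply: pshift_operator; [exact: (fgc i).1 | exact: (fgc i).2 | exact: w_bnd].
exists n, X0, Sk.
split; first exact: n_gt0.
split; first exact: n_incr.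
split; first exact: X0_lp.
split.
  move=> x hx e e0; have [d d0 hd] := lp_norm_small e0.
  have [M hM] := tail_small hx d0.
  exists (fun j => if (- (M%:Z) <= j <= M%:Z) then x j else 0); split.
    by exists M => j; rewrite /inM => /negP /negbTE ->.
  apply: hd; have := hM M (leqnn M).
  suff -> : lp_sub x (fun j => if (- (M%:Z) <= j <= M%:Z) then x j else 0) = trunc M x by [].
  apply: funext => j; rewrite /lp_sub /trunc; case: ifP => _; by rewrite ?subrr ?subr0.
split.
  move=> k xs hxs; have [M hM] := common_M hxs.
  by apply: X0_lp; apply: (seq_X0 (A := Slist k M)); apply: Sk_supp.
split.
  move=> x hx i; apply/cvgrPdist_lt => e e0.
  have [d d0 hd] := lp_norm_small e0.
  apply: ev_of_near; apply: (ev_mono (Tpow_small i hx d0)) => k hk.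
  rewrite sub0r normrN ger0_norm; first exact: hd.
  exact: powR_ge0.
move=> e e0 K0 xs hxs.
have [M hM] := common_M hxs.
have [d d0 hd] := lp_norm_small e0.
have [k [Kk [h1 h2]]] := step (Q := fun k => (K0 <= k)%N) hM d0 (ex_intro _ K0 (fun k h => h)).
by exists k; split => //; split; [apply: hd | move=> i; apply: hd].
Qed.
Lemma iter_period (F : int -> int) b q k : iter q F b = b -> iter k F b = iter (k %% q) F b.
Proof.
move=> hq; rewrite {1}(divn_eq k q) addnC iterD.
congr (iter _ F _); elim: (k %/ q)%N => [|a IH] //.
by rewrite mulSn iterD IH hq.
Qed.

Lemma no_periodic i b q : (0 < q)%N -> iter q (f i) b != b.
Proof.
move=> q0; apply/eqP => hq.
have hpos : (0:R) < 2^-1 by rewrite invr_gt0.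
have h1 : ev (fun k => forall s, s \in iota 0 q ->
    nrm (Wbwd (g i) (w i) (iter s (f i) b) (n k)) <= 2^-1).
  apply: ev_seq => s _.
  have [K1 _ hK1] := cvgr0_norm_le _ (Ha2 i (iter s (f i) b)) _ hpos.
  exists K1 => k hk; have := hK1 k hk; rewrite /= ger0_norm //.
have h2 : ev (fun k => 1 <= nrm (Wfwd (f i) (w i) b (n k))).
  by apply: ev_near; exact: cvgry_ge (Ha1 i b) 1.
have [K1 hK] := ev_and h1 h2.
have [ha hb] := hK K1 (leqnn _).
move: hb; rewrite (Wfwd_bwd _ _ _ (fgc i).1) (iter_period (n K1) hq).
have := ha ((n K1) %% q)%N; rewrite mem_iota add0n ltn_mod q0 => /(_ isT) h h'.
have : (2^-1 : R) < 1 by rewrite invf_lt1 // ltr1n.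
have := le_trans h' h; lra.
Qed.

Lemma ev_avoid i m b : ev (fun k => iter (n k) (f i) m != b).
Proof.
case: (pselect (exists k0, iter (n k0) (f i) m = b)) => [[k0 hk0]|hno]; last first.
  by exists 0%N => k _; apply/eqP => h; apply: hno; exists k.
exists k0.+1 => k hk; apply/eqP => h.
have nlt : (n k0 < n k)%N := homo_ltn (@ltn_trans) n_incr hk.
have := no_periodic i b (q := (n k - n k0)%N); rewrite subn_gt0 => /(_ nlt).
by rewrite -{1}hk0 -iterD subnK ?(ltnW nlt) // h eqxx.
Qed.
Variable c : nat -> K.
Hypothesis c_dense : forall z e, 0 < e -> exists t, nrm (z - c t) < e.

Definition code := (nat * seq (seq nat))%type.

Definition decode (a : nat) : 'I_N -> int -> K :=
  match (unpickle a : option code) with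
  | Some (M, L) => fun i j => if (- (M%:Z) <= j <= M%:Z)
                              then c (nth 0%N (nth [::] L i) (absz (j + M%:Z))) else 0
  | None => fun _ _ => 0
  end.

Definition dM (a : nat) : nat :=
  match (unpickle a : option code) with Some (M, _) => M | None => 0%N end.

Lemma decode_supp a i j : ~ inM (dM a) j -> decode a i j = 0.
Proof.
rewrite /decode /dM; case: (unpickle a) => [[M L]|] //= hj.
by rewrite ifF //; apply/negP.
Qed.

Definition D r := decode (logn 2 r.+1).
Definition Dm r := dM (logn 2 r.+1).

Lemma D_supp r i j : ~ inM (Dm r) j -> D r i j = 0.
Proof. exact: decode_supp. Qed.

Lemma density (ys : 'I_N -> int -> K) : (forall i, lp_mem nrm p (ys i)) ->
  forall eps, 0 < eps -> forall R0,
  exists r, (R0 <= r)%N /\ forall i, (Phi (lp_sub (D r i) (ys i)) <= eps%:E)%E.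
Proof.
move=> hys eps e0 R0.
have e2 : 0 < eps / 2 by rewrite divr_gt0.
have [Mi hMi] := fin_all_exists (fun i => tail_small (hys i) e2).
have [M hM'] : exists M, forall i, (Mi i <= M)%N.
  by exists (\max_(i : 'I_N) Mi i) => i; apply: leq_bigmax.
have [rho r0 hrho] := coord_small (M + M).+1 e2.
pose idx (z : K) : nat := xget 0%N [set t | nrm (z - c t) < rho].
have hidx z : nrm (z - c (idx z)) < rho by apply: (xgetPex 0%N (c_dense z r0)).
pose L := [seq [seq idx (ys i (t%:Z - M%:Z)) | t <- iota 0 (M + M).+1] | i <- enum 'I_N].
pose a := pickle ((M, L) : code).
have pos : (0 < 2 ^ a * R0.*2.+1)%N by rewrite muln_gt0 expn_gt0.
exists (2 ^ a * R0.*2.+1).-1%N; split.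
  rewrite -ltnS prednK //; apply: (leq_trans _ (leq_pmull _ (expn_gt0 2 a))).
  by rewrite ltnS -addnn leq_addr.
have lg : logn 2 (2 ^ a * R0.*2.+1).-1.+1 = a.
  rewrite prednK // lognM ?expn_gt0 // pfactorK // logn_coprime ?addn0 //.
  by rewrite coprime2n /= odd_double.
move=> i; rewrite /D lg /decode pickleK.
set u := lp_sub _ _.
pose al := fun j => if (- (M%:Z) <= j <= M%:Z) then u j else 0.
have hsplit : (Phi u = Phi al + Phi (trunc M (ys i)))%E.
  rewrite /Phi -esumD; try by move=> j _; apply: pw_ge0.
  apply: eq_esum => j _; rewrite /al /trunc /u /lp_sub.
  case: ifP => _; first by rewrite pw0 adde0.
  by rewrite pw0 add0e sub0r nrmN.
rewrite hsplit -[eps]/(eps) (splitr eps) EFinD; apply: leeD; last first.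
  by apply: hMi.
apply: (hrho _ (Mlist M)).
- by rewrite Mlist_size.
- move=> j; rewrite /al; case: ifP => h; last by rewrite eqxx.
  by move=> _; apply: mem_Mlist.
move=> j; rewrite /al; case: ifP => h; last by rewrite nrm0 ltW.
rewrite /u /lp_sub h nrmB.
have ji : (absz (j + M%:Z)%R < (M + M).+1)%N.
  rewrite -ltz_nat abszE ger0_norm; move: h => /andP[h1 h2]; lia.
have -> : nth 0%N (nth [::] L i) (absz (j + M%:Z)) = idx (ys i j).
  rewrite /L (nth_map i) ?size_enum_ord ?ltn_ord // nth_ord_enum.
  rewrite (nth_map 0%N) ?size_iota // nth_iota // add0n.
  congr (idx (ys i _)); rewrite abszE ger0_norm; move: h => /andP[h1 h2]; lia.
exact: ltW.
Qed.
Definition hh : R := 2^-1.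
Definition qq (r : nat) : R := hh ^+ (r + r).

Lemma hh_ge0 : 0 <= hh. Proof. by rewrite /hh invr_ge0. Qed.
Lemma hh_le1 : hh <= 1. Proof. by rewrite /hh invf_le1 // ler1n. Qed.
Lemma qq_gt0 r : 0 < qq r. Proof. by rewrite /qq exprn_gt0 // /hh invr_gt0. Qed.

Lemma n_mono : {homo n : a b / (a <= b)%N >-> (a <= b)%N}.
Proof. by apply: homo_leq => //; [exact: leq_trans | move=> k; exact: ltnW]. Qed.

Section Construction.
Variable bt : R.
Hypothesis bt1 : 1 <= bt.
Hypothesis hT : forall i k v, (Phi (iter k (pshift (f i) (w i)) v) <= (bt ^+ k)%:E * Phi v)%E.

Definition spec (r kp : nat) (F : seq int) (zs : nat -> int -> K) (k : nat) : Prop :=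
  [/\ (kp < k)%N,
      ((bt ^+ n kp)%:E * Phi (Sk k (D r)) <= (qq r)%:E)%E,
      forall i, (Phi (lp_sub (iter (n k) (pshift (f i) (w i)) (Sk k (D r))) (D r i)) <= (qq r)%:E)%E,
      forall j, Sk k (D r) j != 0 -> j \notin F &
      forall s, (s < r)%N -> forall i, (Phi (iter (n k) (pshift (f i) (w i)) (zs s)) <= (qq r)%:E)%E].

Lemma spec_ex r kp F zs : (forall s, (s < r)%N -> X0 (zs s)) -> exists k, spec r kp F zs k.
Proof.
move=> hzs.
have btp : 0 < bt ^+ n kp by rewrite exprn_gt0 // (lt_le_trans ltr01).
have bt1' : 1 <= bt ^+ n kp by rewrite exprn_ege1.
set d := qq r / bt ^+ n kp.
have d0 : 0 < d by rewrite divr_gt0 ?qq_gt0.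
have dq : d <= qq r by rewrite ler_pdivrMr // ler_peMr // ltW // qq_gt0.
have hQ : ev (fun k => (kp < k)%N /\
   (forall i m, m \in Mlist (Dm r) -> forall b, b \in F -> iter (n k) (f i) m != b) /\
   (forall s, s \in iota 0 r -> forall i,
      (Phi (iter (n k) (pshift (f i) (w i)) (zs s)) <= (qq r)%:E)%E)).
  apply: ev_and; first by exists kp.+1.
  apply: ev_and.
    apply: ev_ord => i; apply: ev_seq => m _; apply: ev_seq => b _; exact: ev_avoid.
  apply: ev_seq => s; rewrite mem_iota add0n => hs.
  by apply: ev_ord => i; apply: Tpow_small; [apply: hzs | apply: qq_gt0].
have [k [[Qk1 [Qk2 Qk3]] [h1 h2]]] := step (@D_supp r) d0 hQ.
exists k; split => //.
- rewrite -[qq r](@divfK _ (bt ^+ n kp)) ?gt_eqF // mulrC EFinM.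
  by apply: lee_wpmul2l => //; rewrite lee_fin ltW.
- by move=> i; apply: (le_trans (h2 i)); rewrite lee_fin.
- move=> j /(Sk_supp (@D_supp r)) /flatten_mapP[i _ /mapP[m mM ->]].
  by apply/negP => /(Qk2 i m mM) /negP; apply.
- by move=> s hs i; apply: Qk3; rewrite mem_iota add0n.
Qed.

Definition ch r kp F zs := xget 0%N [set k | spec r kp F zs k].

Fixpoint st (r : nat) : nat * seq int * (nat -> int -> K) :=
  match r with
  | 0 => (0%N, [::], fun _ _ => 0)
  | r'.+1 => let: (kp, F, zs) := st r' in
             let k := ch r' kp F zs in
             (k, F ++ Slist k (Dm r'), fun s => if s == r' then Sk k (D r') else zs s)
  end.

Definition kk r := (st r.+1).1.1.
Definition PP r := Sk (kk r) (D r).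

Lemma PP_X0 r : X0 (PP r).
Proof. by apply: (seq_X0 (A := Slist (kk r) (Dm r))); apply: Sk_supp; apply: D_supp. Qed.

Lemma st_inv r :
  [/\ (st r).1.1 = (if r is r'.+1 then kk r' else 0%N),
      forall s, (s < r)%N -> (st r).2 s = PP s &
      forall s j, (s < r)%N -> PP s j != 0 -> j \in (st r).1.2].
Proof.
elim: r => [|r [IH1 IH2 IH3]]; first by split.
have kkE : kk r = (let: (kp, F, zs) := st r in ch r kp F zs).
  by rewrite /kk /=; case: (st r) => [[kp F] zs].
split => //.
- move=> s hs; rewrite /=; move: kkE IH2 IH3; case: (st r) => [[kp F] zs] /= kkE IH2 IH3.
  case: eqP => [->|ne]; first by rewrite /PP kkE.
  by apply: IH2; rewrite ltn_neqAle; apply/andP; split; [apply/eqP|rewrite -ltnS].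
- move=> s j hs hj; rewrite /=; move: kkE IH2 IH3; case: (st r) => [[kp F] zs] /= kkE IH2 IH3.
  rewrite mem_cat; case: (ltngtP s r) => sr.
  + by rewrite (IH3 s j sr hj).
  + by move: hs; rewrite ltnS leqNgt sr.
  + move: hj; rewrite sr /PP kkE => hj.
    by rewrite (Sk_supp (@D_supp r) hj) orbT.
Qed.

Lemma kk_spec r : let: (kp, F, zs) := st r in spec r kp F zs (kk r).
Proof.
have [_ h2 _] := st_inv r.
have kkE : kk r = (let: (kp, F, zs) := st r in ch r kp F zs).
  by rewrite /kk /=; case: (st r) => [[kp F] zs].
move: kkE h2; case: (st r) => [[kp F] zs] /= -> h2.
apply: xgetPex; apply: spec_ex => s hs.
by rewrite (h2 s hs); apply: PP_X0.
Qed.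

Definition kpr r := if r is r'.+1 then kk r' else 0%N.

Lemma kk_specE r : spec r (kpr r) (st r).1.2 (st r).2 (kk r).
Proof.
have [h1 _ _] := st_inv r; have := kk_spec r; rewrite /kpr -h1.
by case: (st r) => [[kp F] zs].
Qed.

Lemma kk_lt r : (kk r < kk r.+1)%N.
Proof. by have [h _ _ _ _] := kk_specE r.+1. Qed.

Lemma kk_mono : {homo kk : a b / (a <= b)%N >-> (a <= b)%N}.
Proof. by apply: homo_leq => //; [exact: leq_trans | move=> k; exact: ltnW (kk_lt k)]. Qed.

Lemma PP_disj s r j : (s < r)%N -> PP s j != 0 -> PP r j = 0.
Proof.
move=> sr hs; have [_ _ h3] := st_inv r.
have jF := h3 s j sr hs.
have [_ _ _ h4 _] := kk_specE r.
by apply/eqP; apply: contraTT jF => /h4.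
Qed.


Definition xx : int -> K := fun j => PP (xget 0%N [set s | PP s j != 0]) j.

Lemma xx_eq j s : PP s j != 0 -> xx j = PP s j.
Proof.
move=> hs; have h := xgetPex 0%N (ex_intro (fun s => PP s j != 0) s hs).
rewrite /xx; set s' := xget _ _ in h *.
case: (ltngtP s s') => [lt|lt|->] //.
  by move: h; rewrite (PP_disj lt hs) eqxx.
by move: hs; rewrite (PP_disj lt h) eqxx.
Qed.

Lemma none_zero (Q : nat -> int -> K) j : ~ (exists s, Q s j != 0) -> forall s, Q s j = 0.
Proof. by move=> hno s; case: (eqVneq (Q s j) 0) => // h; exfalso; apply: hno; exists s. Qed.

Lemma xx_0 j : (forall s, PP s j = 0) -> xx j = 0.
Proof. by move=> h; rewrite /xx h. Qed.

Lemma single_le (a : nat -> \bar R) s0 : (forall s, (0 <= a s)%E) ->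
  (a s0 <= \esum_(s in [set: nat]) a s)%E.
Proof.
move=> a0; apply: esum_ge; exists [set s0]; first by split => //; exact: finite_set1.
by rewrite fsbig_set1.
Qed.

Lemma bt_ge1 k : 1 <= bt ^+ k.
Proof. by rewrite exprn_ege1. Qed.

Lemma PP_bound s : (Phi (PP s) <= (hh ^+ s)%:E)%E.
Proof.
have [_ h _ _ _] := kk_specE s.
apply: (le_trans _ (le_trans h _)).
  rewrite -{1}[Phi (PP s)]mul1e; apply: lee_wpmul2r; first exact: Phi_ge0.
  by rewrite lee_fin bt_ge1.
rewrite lee_fin /qq; apply: ler_wiXn2l; [exact: hh_ge0 | exact: hh_le1 | exact: leq_addr].
Qed.

Lemma xx_lp : lp_mem nrm p xx.
Proof.
rewrite /lp_mem -/(Phi xx).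
apply: (le_lt_trans (y := \esum_(j in [set: int]) \esum_(s in [set: nat]) ((nrm (PP s j)) `^ p)%:E)).
  apply: le_esum => j _.
  case: (pselect (exists s, PP s j != 0)) => [[s hs]|hno].
    by rewrite (xx_eq hs); apply: (single_le (a := fun s => ((nrm (PP s j)) `^ p)%:E)) => s'; apply: pw_ge0.
  rewrite xx_0; first by rewrite pw0; apply: esum_ge0 => s _; apply: pw_ge0.
  exact: none_zero hno.
rewrite esum_swap; last by move=> j s; apply: pw_ge0.
apply: (le_lt_trans (y := \esum_(s in [set: nat]) (1 * hh ^+ s)%:E)).
  by apply: le_esum => s _; rewrite mul1r; apply: PP_bound.
by rewrite /hh; apply: (le_lt_trans (esum_geom ler01)); rewrite ltry.
Qed.

Lemma err_bound r i :
  (Phi (lp_sub (iter (n (kk r)) (pshift (f i) (w i)) xx) (D r i)) <=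
   ((2 `^ p) * (qq r + 2 * hh ^+ r))%:E)%E.
Proof.
set m := n (kk r).
set T := pshift (f i) (w i).
set V := lp_sub (iter m T (PP r)) (D r i).
set be := fun j => \esum_(s in [set: nat])
   (if s != r then ((nrm (iter m T (PP s) j)) `^ p)%:E else 0%E).
have be0 j : (0 <= be j)%E by apply: esum_ge0 => s _; case: ifP => _ //; apply: pw_ge0.
apply: (le_trans (Phi_quasi (al := fun j => ((nrm (V j)) `^ p)%:E) (be := be) _ be0 _)).
- by move=> j; apply: pw_ge0.
- move=> j; set t := iter m (f i) j.
  have eq : lp_sub (iter m T xx) (D r i) j = V j + Wfwd (f i) (w i) j m * (xx t - PP r t).
    by rewrite /V /lp_sub !iter_pshift -/t; ring.
  rewrite eq.
  have hU : (((nrm (Wfwd (f i) (w i) j m * (xx t - PP r t))) `^ p)%:E <= be j)%E.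
    case: (eqVneq (xx t) (PP r t)) => [->|ne]; first by rewrite subrr mulr0 pw0.
    case: (pselect (exists s, PP s t != 0)) => [[s0 hs0]|hno]; last first.
      move: ne; rewrite xx_0; last exact: none_zero hno.
      rewrite (none_zero hno r).
      by rewrite eqxx.
    have s0r : s0 != r by apply: contra_neq ne => e; rewrite (xx_eq hs0) e.
    have Pr0 : PP r t = 0.
      case: (ltngtP s0 r) => [lt|lt|e]; first exact: PP_disj lt hs0.
        by case: (eqVneq (PP r t) 0) => // hr; move: hs0; rewrite (PP_disj lt hr) eqxx.
      by move: s0r; rewrite e eqxx.
    rewrite (xx_eq hs0) Pr0 subr0.
    have := single_le (a := fun s => if s != r then ((nrm (iter m T (PP s) j)) `^ p)%:E else 0%E) s0.
    rewrite s0r iter_pshift -/t; apply => s; case: ifP => _ //; apply: pw_ge0.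
  apply: (le_trans (y := ((2 `^ p) * ((nrm (V j)) `^ p + (nrm (Wfwd (f i) (w i) j m * (xx t - PP r t))) `^ p))%:E)).
    by rewrite lee_fin pw_tri.
  rewrite EFinM EFinD; apply: lee_wpmul2l; first by rewrite lee_fin powR_ge0.
  by apply: leeD.
rewrite EFinM; apply: lee_wpmul2l; first by rewrite lee_fin powR_ge0.
rewrite EFinD; apply: leeD.
  by have [_ _ h _ _] := kk_specE r; apply: h.
rewrite /be esum_swap; last by move=> j s; case: ifP => _ //; apply: pw_ge0.
apply: (le_trans _ (esum_geom (exprn_ge0 r hh_ge0))).
apply: le_esum => s _.
case: (eqVneq s r) => [->|ne].
  rewrite esum1 //.
  by rewrite lee_fin mulr_ge0 // exprn_ge0 // hh_ge0.
rewrite /=.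
rewrite -/(Phi (iter m T (PP s))).
case: (ltngtP s r) => [lt|lt|e]; last by move: ne; rewrite e eqxx.
  have [_ _ _ _ h5] := kk_specE r.
  have [_ h2 _] := st_inv r.
  have := h5 s lt i; rewrite (h2 s lt) => h; apply: (le_trans h).
  rewrite lee_fin /qq exprD ler_wpM2l ?exprn_ge0 ?hh_ge0 //.
  by apply: ler_wiXn2l; [exact: hh_ge0 | exact: hh_le1 | exact: ltnW].
case: s lt ne => [//|s'] lt _.
have [_ h _ _ _] := kk_specE s'.+1.
apply: (le_trans (hT i m (PP s'.+1))).
apply: (le_trans _ (le_trans h _)).
  apply: lee_wpmul2r; first exact: Phi_ge0.
  rewrite lee_fin /kpr; apply: ler_weXn2l => //.
  by apply: n_mono; apply: kk_mono; rewrite -ltnS.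
rewrite lee_fin /qq exprD ler_wpM2r ?exprn_ge0 ?hh_ge0 //.
by apply: ler_wiXn2l; [exact: hh_ge0 | exact: hh_le1 | exact: ltnW].
Qed.

End Construction.
Theorem dHC_holds : dHC nrm p (fun i => pshift (f i) (w i)).
Proof.
have [bt bt1 hT] : exists2 bt : R, 1 <= bt & forall i k v,
    (Phi (iter k (pshift (f i) (w i)) v) <= (bt ^+ k)%:E * Phi v)%E.
  have [Bi hBi] := fin_all_exists w_bnd.
  set Bw := 1 + \sum_(i <- enum 'I_N) `|Bi i|.
  have s0 : 0 <= \sum_(i <- enum 'I_N) `|Bi i| by apply: sumr_ge0.
  have Bw1 : 1 <= Bw by rewrite /Bw; lra.
  have hB i m : nrm (w i m) <= Bw.
    apply: (le_trans (hBi i m)); apply: (le_trans (ler_norm _)).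
    apply: (le_trans (y := \sum_(i <- enum 'I_N) `|Bi i|)); last by rewrite /Bw; lra.
    by apply: (le_sumR_mem (F := fun i => `|Bi i|)) => //; rewrite mem_enum.
  exists (Bw `^ p).
    have := powR_le ler01 Bw1; rewrite powR1 //.
  move=> i k v; apply: Phi_iter; [exact: (fgc i).1 | exact: (fgc i).2 | lra | exact: hB].
split; first by apply: ltnW.
split; first by move=> i; apply: pshift_operator; [exact: (fgc i).1 | exact: (fgc i).2 | exact: w_bnd].
exists (xx bt); split; first exact: xx_lp bt1.
move=> ys hys e e0.
have [d d0 hd] := lp_norm_small e0.
set C := 2 `^ p.
have C0 : 0 < C by rewrite powR_gt0.
set d1 := d / (2 * C).
have d10 : 0 < d1 by rewrite divr_gt0 // mulr_gt0.
have [R0 hR0] : exists R0, forall r, (R0 <= r)%N -> C * (qq r + 2 * hh ^+ r) <= d1.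
  have hh1 : `|hh| < 1 by rewrite ger0_norm ?hh_ge0 // /hh invf_lt1 // ltr1n.
  have d2 : 0 < d1 / (3 * C) by rewrite divr_gt0 // mulr_gt0.
  have [K1 _ hK1] := cvgr0_norm_le _ (cvg_expr hh1) _ d2.
  exists K1 => r hr; have := hK1 r hr; rewrite /= ger0_norm ?exprn_ge0 ?hh_ge0 // => h.
  have hq : qq r <= hh ^+ r.
    by rewrite /qq; apply: ler_wiXn2l; [exact: hh_ge0 | exact: hh_le1 | exact: leq_addr].
  have h' : C * (qq r + 2 * hh ^+ r) <= C * (3 * hh ^+ r).
    by apply: ler_wpM2l; [exact: ltW | lra].
  apply: (le_trans h'); rewrite mulrA -ler_pdivlMl; last by rewrite mulr_gt0.
  by rewrite [_^-1 * d1]mulrC [C * 3]mulrC.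
have [r [Rr hr]] := density hys d10 R0.
exists (n (kk bt r)) => i; apply: hd.
apply: (le_trans (Phi_tri (a := lp_sub (iter (n (kk bt r)) (pshift (f i) (w i)) (xx bt)) (D r i))
   (b := lp_sub (D r i) (ys i)) _)).
  by move=> j; rewrite /lp_sub addrA subrK.
have h1' : (Phi (lp_sub (iter (n (kk bt r)) (pshift (f i) (w i)) (xx bt)) (D r i)) <= d1%:E)%E.
  by apply: (le_trans (err_bound bt1 hT r i)); rewrite lee_fin; apply: hR0.
have : (C%:E * (d1%:E + d1%:E) = d%:E)%E.
  rewrite -EFinD -EFinM /d1; congr (_%:E); field; exact: lt0r_neq0.
move=> <-; apply: lee_wpmul2l; first by rewrite lee_fin ltW.
exact: leeD h1' (hr i).
Qed.

End LP.

Theorem main_gen (R : realType) (K : fieldType) (nrm : K -> R) :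
  nrm 0 = 0 -> (forall x, 0 <= nrm x) -> (forall x, nrm x = 0 -> x = 0) ->
  (forall x y, nrm (x * y) = nrm x * nrm y) -> (forall x y, nrm (x + y) <= nrm x + nrm y) ->
  (forall x, nrm (- x) = nrm x) -> (forall e, 0 < e -> exists z, z != 0 /\ nrm z < e) ->
  (exists c : nat -> K, forall z e, 0 < e -> exists t, nrm (z - c t) < e) ->
  theorem2p4_for nrm.
Proof.
move=> h0 hge0 heq0 hM hD hN hsmall [c hc].
move=> p N f g w n p1 N2 fgc wB w0 n0 ninc Ha1 Ha2 Hb.
have p0 : 0 < p by apply: (lt_le_trans ltr01).
split.
  by apply: dBUC_holds.
by apply: dHC_holds hc.
Qed.
Lemma real_inst (R : realType) : theorem2p4_for (fun x : R => `|x|%R).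
Proof.
apply: main_gen.
- exact: normr0.
- by move=> x; apply: normr_ge0.
- by move=> x /normr0_eq0.
- by move=> x y; apply: normrM.
- by move=> x y; apply: ler_normD.
- by move=> x; apply: normrN.
- move=> e e0; exists (e / 2); split; first by rewrite gt_eqF // divr_gt0.
  rewrite ger0_norm; first lra.
  by rewrite divr_ge0 // ltW.
exists (fun t => match (unpickle t : option rat) with Some q => ratr q | None => 0 end).
move=> z e e0.
have [q hq] : exists q : rat, ratr q \in `]z - e, z + e[ by apply: rat_in_itvoo; lra.
exists (pickle q); rewrite pickleK.
move: hq; rewrite in_itv /= => /andP[h1 h2].
rewrite ltr_norml; apply/andP; split; lra.
Qed.

Lemma complex_inst (R : realType) : theorem2p4_for (@ComplexField.Normc.normc R).
Proof.
apply: main_gen.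
- exact: ComplexField.Normc.normc0.
- by move=> [a b]; apply: sqrtr_ge0.
- exact: ComplexField.Normc.eq0_normc.
- exact: ComplexField.Normc.normcM.
- exact: le_normcD.
- exact: normcN.
- move=> e e0; exists ((e / 2) +i* 0)%C.
  have hn : ComplexField.Normc.normc ((e / 2) +i* 0)%C = e / 2.
    rewrite /ComplexField.Normc.normc /= expr0n addr0 sqrtr_sqr ger0_norm //.
    by rewrite divr_ge0 // ltW.
  split; last by rewrite hn; lra.
  apply/eqP => hz; move: hn; rewrite hz ComplexField.Normc.normc0 => h; lra.
exists (fun t => match (unpickle t : option (rat * rat)) with
   | Some (a, b) => (ratr a +i* ratr b)%C | None => 0 end).
move=> [x y] e e0.
have [qa ha] : exists q : rat, ratr q \in `]x - e / 2, x + e / 2[ by apply: rat_in_itvoo; lra.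
have [qb hb] : exists q : rat, ratr q \in `]y - e / 2, y + e / 2[ by apply: rat_in_itvoo; lra.
exists (pickle (qa, qb)); rewrite pickleK.
move: ha hb; rewrite !in_itv /= => /andP[h1 h2] /andP[h3 h4].
rewrite /ComplexField.Normc.normc /=.
set u := x - ratr qa; set v := y - ratr qb.
have hu : `|u| < e / 2 by rewrite ltr_norml; apply/andP; split; rewrite /u; lra.
have hv : `|v| < e / 2 by rewrite ltr_norml; apply/andP; split; rewrite /v; lra.
apply: (le_lt_trans (y := Num.sqrt ((`|u| + `|v|) ^+ 2))).
  apply: ler_wsqrtr; rewrite -(real_normK (num_real u)) -(real_normK (num_real v)).
  have := normr_ge0 u; have := normr_ge0 v; nra.
rewrite sqrtr_sqr ger0_norm ?addr_ge0 //; lra.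
Qed.

Theorem theorem2p4 (R : realType) :
  theorem2p4_for (fun x : R => `|x|%R) /\ theorem2p4_for (@ComplexField.Normc.normc R).
Proof. by split; [apply: real_inst | apply: complex_inst]. Qed.
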